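(* Let $p$ be a prime and let $m$ be an integer. Let $G$ be a vector space over the field $\mathbb{F}_p$ of dimension $d \geq 3$, and let $S$ be a subset of $G$ such that $|S \cap H| \geq mp^{d-2}$ for each vector hyperplane $H$ (that is, each linear subspace of dimension $d - 1$) of $G$. Then $|S| \geq mp^{d-1}$. *)

(* Defs.v *)
From mathcomp Require Import all_boot all_order all_algebra.
Set Implicit Arguments. Unset Strict Implicit. Unset Printing Implicit Defensive.
Import Order.TTheory GRing.Theory Num.Theory.

(* Main.v *)
Require Import Defs.
From Stdlib Require Import Lia Arith.
Lemma arithA' p P n s e s' : 2 <= p -> 1 <= P -> e <= 1 -> s = e + s' ->
  s + Nat.pred (p*(p*(p*P)))*(n*(p*P)+1) <= e*(p*(p*(p*P))) + s'*(p*(p*P)) -> n*(p*(p*P)) <= s.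
Proof.
intros hp hP he hs h.
assert (E1 : n*(p*(p*P)) = p*(n*(p*P))) by ring.
assert (E2 : p*(p*(p*P)) * (n*(p*P)) = n*(p*(p*P)) * (p*(p*P))) by ring.
assert (HZ : 2 <= p*P) by nia.
assert (HY : 2*(p*P) <= p*(p*P)) by nia.
assert (HX : 2*(p*(p*P)) <= p*(p*(p*P))) by nia.
revert h E1 E2 HY HX. generalize (p*(p*(p*P))) as X. generalize (n*(p*(p*P))) as N.
generalize (p*(p*P)) as Y. generalize (n*(p*P)) as A.
intros A Y N X h E1 E2 HY HX.
assert (F1 : Nat.pred X * (A+1) + A + 1 = X*A + X) by (destruct X; [lia| simpl; ring]).
assert (F3 : e*X + s'*Y + Y <= X + s*Y) by (destruct e as [|[|]]; subst s; nia).
assert (HA : 2*A <= N) by nia.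
destruct (Nat.le_gt_cases N s) as [|hc]; [assumption|].
assert (F4 : s*Y + N + Y <= N*Y + s + 1) by nia.
lia.
Qed.
Lemma arithB' p P n t e t' Q : 2 <= p -> 1 <= P -> 1 <= n -> e <= 1 -> t = e + t' ->
  p + Q = p*(p*(p*P)) -> t <= n*(p*P) ->
  p*t + Q*(n*P+1) <= e*(p*(p*(p*P))) + t'*(p*(p*P)) -> False.
Proof.
intros hp hP hn he ht hQ htle h.
assert (E1 : n*(p*P) = p*(n*P)) by ring.
assert (E2 : p*(p*(p*P))*(n*P) = p*(n*P)*(p*(p*P))) by ring.
assert (HY : 2*p <= p*(p*P)) by nia.
assert (HX : p*(p*P) <= p*(p*(p*P))) by nia.
assert (HB : 1 <= n*P) by nia.
rewrite E1 in htle.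
revert h E2 HY HX hQ htle HB. generalize (p*(p*(p*P))) as X. generalize (p*(p*P)) as Y. generalize (n*P) as B.
intros B Y X h E2 HY HX hQ htle HB.
assert (F1 : Q*(B+1) + p*B + p = X*B + X) by (rewrite <- hQ; ring).
assert (F3 : e*X + t'*Y + Y <= X + t*Y) by (destruct e as [|[|]]; subst t; nia).
assert (F5 : t*Y + p*(p*B) <= p*B*Y + p*t) by nia.
assert (F6 : p*B <= p*(p*B)) by nia.
lia.
Qed.
Lemma arithC' p P n t s w : n*(p*P) <= t -> w <= n * P -> t + p*(n*(p*P)) <= s + p*w -> n*(p*(p*P)) <= s.
Proof. intros. nia. Qed.

From mathcomp Require Import all_boot all_order all_algebra.
Import Order.TTheory GRing.Theory Num.Theory.
Local Open Scope ring_scope.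
Set Implicit Arguments. Unset Strict Implicit.
Local Notation R x c := (((x *m c) 0 0 == 0)%R).

Lemma card_sumb (T : finType) (A : {set T}) : #|A| = (\sum_x (x \in A : nat))%N.
Proof. by rewrite -sum1_card big_mkcond /=; apply: eq_bigr => x _; case: (x \in A). Qed.

Lemma dcount (A B : finType) (T : {set A}) (R : A -> B -> bool) :
  (\sum_(b : B) #|[set a in T | R a b]| = \sum_(a in T) #|[set b | R a b]|)%N.
Proof.
under eq_bigr do rewrite card_sumb.
rewrite exchange_big /= [RHS]big_mkcond /=; apply: eq_bigr => a _.
rewrite card_sumb; case: (boolP (a \in T)) => h /=.
  by apply: eq_bigr => b _; rewrite !inE h.
by rewrite big1 // => b _; rewrite inE (negbTE h).
Qed.

Lemma card_fib (A B : finType) (f : A -> B) :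
  #|A| = (\sum_(b : B) #|[set a | f a == b]|)%N.
Proof.
rewrite -sum1_card (partition_big f xpredT) //; apply: eq_bigr => b _.
by rewrite -sum1_card; apply: eq_bigl => a; rewrite inE.
Qed.

Section S.
Variable p : nat.
Hypothesis Hp : prime p.
Variable d : nat.
Local Notation F := 'F_p.

Lemma card_ker_row (x : 'rV[F]_d) : x != 0 ->
  #|[set c : 'cV[F]_d | (x *m c) 0 0 == 0]| = (p ^ d.-1)%N.
Proof.
move=> x0.
have [i xi] : exists i, x 0 i != 0.
  apply/existsP; apply: contraR x0 => /existsPn h; apply/eqP/matrixP => a j.
  by rewrite ord1 mxE; apply/eqP/negPn/h.
pose phi (c : 'cV[F]_d) := (x *m c) 0 0.
pose e : 'cV[F]_d := (x 0 i)^-1 *: delta_mx i 0.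
have phiD c a : phi (c + a *: e) = phi c + a.
  rewrite /phi mulmxDr -!scalemxAr !mxE; congr (_ + _).
  rewrite (bigD1 i) //= big1 ?addr0.
    by rewrite !mxE !eqxx /= mulr1 mulVf // mulr1.
  by move=> k /negbTE ki; rewrite !mxE ki mulr0.
have fib a : #|[set c | phi c == a]| = #|[set c | phi c == 0]|.
  have -> : [set c | phi c == a] = [set c + a *: e | c in [set c | phi c == 0]].
    apply/setP => c; rewrite inE; apply/idP/imsetP => [/eqP h|[c' ]].
      exists (c - a *: e); last by rewrite subrK.
      rewrite inE; have := phiD (c - a *: e) a; rewrite subrK h.
      by move/(congr1 (fun z => z - a)); rewrite subrr addrK => <-.
    by rewrite inE => /eqP h ->; rewrite phiD h add0r.
  by rewrite card_imset //; apply: addIr.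
have := @card_fib _ F phi; rewrite (eq_bigr _ (fun b _ => fib b)).
rewrite sum_nat_const card_mx !card_Fp // muln1.
have dpos : (0 < d)%N := leq_ltn_trans (leq0n i) (ltn_ord i).
have -> : (p ^ d = p * p ^ d.-1)%N by rewrite -expnS prednK.
by move/eqP; rewrite eqn_pmul2l ?prime_gt0 // => /eqP ->.
Qed.
Lemma hyp_of (c : 'cV[F]_d) : c != 0 -> exists H : {vspace 'rV[F]_d},
  \dim H = d.-1 /\ forall x, (x \in H) = ((x *m c) 0 0 == 0).
Proof.
move=> c0.
pose f : 'Hom('rV[F]_d, 'M[F]_(1,1)) := linfun (mulmxr c).
exists (lker f); split; last first.
  move=> x; rewrite memv_ker lfunE /=.
  apply/eqP/eqP => [->|h]; first by rewrite mxE.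
  by apply/matrixP => i j; rewrite !ord1 h mxE.
have hd := limg_ker_dim f fullv.
rewrite capfv dimvf /dim /= mul1n in hd.
have : (\dim (limg f) = 1)%N.
  apply/eqP; rewrite eqn_leq; apply/andP; split.
    by rewrite -[X in (_ <= X)%N](@mul1n 1) -[(1 * 1)%N]/(dim 'M[F]_(1,1)) -dimvf dimvS // subvf.
  rewrite lt0n dimv_eq0; apply/eqP => h.
  move/negP: c0; apply; apply/eqP/matrixP => i j.
  rewrite !mxE ord1.
  have : f (delta_mx 0 i) \in limg f by apply: memv_img; exact: memvf.
  rewrite h memv0 lfunE /= => /eqP/matrixP/(_ 0 0).
  rewrite !mxE => <-.
  rewrite (bigD1 i) //= big1 ?addr0 ?mxE ?eqxx ?mul1r //.
  by move=> k /negbTE ki; rewrite mxE ki andbF mul0r.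
move=> h1; rewrite h1 in hd; move: hd; set k := \dim (lker f); clearbody k => hd.
by rewrite -hd addn1.
Qed.


Lemma card_all : #|'cV[F]_d| = (p ^ d)%N.
Proof. by rewrite card_mx card_Fp // muln1. Qed.

Lemma sum_ker (T : {set 'rV[F]_d}) :
  (\sum_(c : 'cV[F]_d) #|[set x in T | R x c]| =
   ((0%R : 'rV[F]_d) \in T) * p ^ d + #|T :\ (0%R : 'rV[F]_d)| * p ^ d.-1)%N.
Proof.
rewrite (@dcount _ _ T (fun x c => R x c)).
have h0 : #|[set c : 'cV[F]_d | R (0 : 'rV[F]_d) c]| = (p ^ d)%N.
  have -> : [set c : 'cV[F]_d | R (0 : 'rV[F]_d) c] = setT.
    by apply/setP => c; rewrite !inE mul0mx mxE eqxx.
  by rewrite cardsT card_all.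
case: (boolP (0 \in T)) => h.
  rewrite (big_setD1 _ h) /= h0 mul1n; congr (_ + _)%N.
  rewrite -sum_nat_const; apply: eq_bigr => x; rewrite !inE => /andP [x0 _].
  exact: card_ker_row.
rewrite mul0n add0n -sum_nat_const; apply: eq_big => x.
  by rewrite !inE; case: eqP => // ->; rewrite (negbTE h).
by move=> xT; apply: card_ker_row; apply: contraNneq h => <-.
Qed.


Lemma lin_entry (x : 'rV[F]_d) (c c0 : 'cV[F]_d) (a : F) :
  (x *m (c + a *: c0)) 0 0 = (x *m c) 0 0 + a * (x *m c0) 0 0.
Proof. by rewrite mulmxDr -scalemxAr !mxE. Qed.

Lemma part_lemma (S : {set 'rV[F]_d}) (c0 c : 'cV[F]_d) (k w : nat) :
  (forall a : F, c + a *: c0 != 0) ->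
  (#|[set x in [set x in S | R x c0] | R x c]| <= w)%N ->
  (forall c' : 'cV[F]_d, c' != 0 -> (k <= #|[set x in S | R x c']|)%N) ->
  (#|[set x in S | R x c0]| + p * k <= #|S| + p * w)%N.
Proof.
move=> cne hw hk.
set B := [set x : 'rV[F]_d | R x c0].
set T := [set x in S | R x c0].
set U := S :\: B.
have hS : (#|T| + #|U| = #|S|)%N by rewrite -(cardsID B S) /T setIdE.
have hU : #|U| = (\sum_(a : F) #|[set x in U | R x (c + a *: c0)]|)%N.
  rewrite (@dcount _ _ U (fun x a => R x (c + a *: c0))) -sum1_card.
  apply: eq_bigr => x; rewrite !inE => /andP [xc0 _].
  have -> : [set a : F | R x (c + a *: c0)] = [set - (x *m c) 0 0 / (x *m c0) 0 0].
    apply/setP => a; rewrite !inE lin_entry addr_eq0; apply/eqP/eqP => h.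
      by rewrite h opprK mulfK.
    by rewrite h divfK // opprK.
  by rewrite cards1.
have hA a : #|[set x in S | R x (c + a *: c0)]| =
    (#|[set x in U | R x (c + a *: c0)]| + #|[set x in T | R x c]|)%N.
  rewrite -(cardsID B) addnC; congr (_ + _)%N; apply: eq_card => x; rewrite !inE.
    by rewrite andbA.
  rewrite lin_entry; case: (boolP (R x c0)) => h /=; last by rewrite !andbF.
  by rewrite (eqP h) mulr0 addr0 !andbT.
have hsum : (p * k <= \sum_(a : F) #|[set x in S | R x (c + a *: c0)]|)%N.
  have := @leq_sum _ (index_enum F) xpredT (fun=> k) _ (fun a _ => hk _ (cne a)).
  by rewrite sum_nat_const card_Fp.
rewrite (eq_bigr _ (fun a _ => hA a)) big_split /= -hU sum_nat_const card_Fp // in hsum.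
rewrite -hS -addnA leq_add2l (leq_trans hsum) // leq_add2l leq_mul2l hw orbT //.
Qed.

End S.

Lemma arithA2 p P n s e s' : (2 <= p)%N -> (1 <= P)%N -> (e <= 1)%N -> s = (e + s')%N ->
  (s + (p*(p*(p*P))).-1*(n*(p*P)+1) <= e*(p*(p*(p*P))) + s'*(p*(p*P)))%N -> (n*(p*(p*P)) <= s)%N.
Proof.
move=> /ssrnat.leP h1 /ssrnat.leP h2 /ssrnat.leP h3 h4 /ssrnat.leP h5; apply/ssrnat.leP.
rewrite -?multE -?plusE in h1 h2 h3 h4 h5 *; exact: (arithA' _ _ _ _ _ _ h1 h2 h3 h4 h5).
Qed.
Lemma arithB2 p P n t e t' Q : (2 <= p)%N -> (1 <= P)%N -> (1 <= n)%N -> (e <= 1)%N -> t = (e + t')%N ->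
  (p + Q = p*(p*(p*P)))%N -> (t <= n*(p*P))%N ->
  (p*t + Q*(n*P+1) <= e*(p*(p*(p*P))) + t'*(p*(p*P)))%N -> False.
Proof.
move=> /ssrnat.leP h1 /ssrnat.leP h2 /ssrnat.leP h3 /ssrnat.leP h4 h5 h6 /ssrnat.leP h7 /ssrnat.leP h8.
rewrite -?multE -?plusE in h1 h2 h3 h4 h5 h6 h7 h8; exact: (arithB' _ _ _ _ _ _ _ h1 h2 h3 h4 h5 h6 h7 h8).
Qed.
Lemma arithC2 p P n t s w : (n*(p*P) <= t)%N -> (w <= n * P)%N -> (t + p*(n*(p*P)) <= s + p*w)%N -> (n*(p*(p*P)) <= s)%N.
Proof.
move=> /ssrnat.leP h1 /ssrnat.leP h2 /ssrnat.leP h3; apply/ssrnat.leP.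
rewrite -?multE -?plusE in h1 h2 h3 *; exact: (arithC' _ _ _ _ _ _ h1 h2 h3).
Qed.

Unset Implicit Arguments.

Theorem mainTheorem8 (p : nat) (m : int) (d : nat) (S : {set 'rV['F_p]_d}) :
  prime p -> (3 <= d)%N ->
  (forall H : {vspace 'rV['F_p]_d}, \dim H = d.-1 ->
     m * ((p ^ (d - 2))%N)%:Z <= (#|[set x in S | x \in H]|)%:Z) ->
  m * ((p ^ (d - 1))%N)%:Z <= (#|S|)%:Z.
Proof.
move=> Hp d3 hH.
case: m hH => n hH; last first.
  have h0 : Negz n * ((p ^ (d - 1))%N)%:Z <= 0 by rewrite NegzE mulNr oppr_le0.
  by apply: le_trans h0 _; rewrite lez_nat.
rewrite -PoszM lez_nat.
have hc : forall c : 'cV['F_p]_d, c != 0 ->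
    (n * p ^ (d - 2) <= #|[set x in S | R x c]|)%N.
  move=> c c0; have [H [dH mH]] := hyp_of c0.
  have := hH H dH; rewrite -PoszM lez_nat => /leq_trans; apply.
  by apply: eq_leq; apply: eq_card => x; rewrite !inE mH.
case: (posnP n) => [->|npos]; first by rewrite mul0n.
have [k dk] : exists k, d = k.+3 by exists (d - 3)%N; rewrite -addn3 subnK.
subst d.
have hp2 : (2 <= p)%N := prime_gt1 Hp.
set P := (p ^ k)%N.
have hP : (1 <= P)%N by rewrite expn_gt0 prime_gt0.
have e2 : (p ^ (k.+3 - 2) = p * P)%N by rewrite subSS subSS subn0 expnS.
have e1 : (p ^ (k.+3 - 1) = p * (p * P))%N by rewrite subSS subn0 !expnS.
have e0 : (p ^ k.+3.-1 = p * (p * P))%N by rewrite /= !expnS.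
have e3 : (p ^ k.+3 = p * (p * (p * P)))%N by rewrite !expnS.
rewrite e1; rewrite e2 in hc.
have hcard : #|'cV['F_p]_k.+3| = (p * (p * (p * P)))%N by rewrite card_all.
case: (boolP [exists c : 'cV['F_p]_k.+3,
   (c != 0) && (#|[set x in S | R x c]| <= n * (p * P))%N]).
- case/existsP => c0 /andP [c0ne ht].
  set T := [set x in S | R x c0].
  set Sp := [set a *: c0 | a : 'F_p].
  have hT := hc c0 c0ne.
  case: (boolP [exists c, (c \notin Sp) && (#|[set x in T | R x c]| <= n * P)%N]).
    case/existsP => c /andP [cS hw].
    have cne : forall a : 'F_p, c + a *: c0 != 0.
      move=> a; apply: contra cS => /eqP h; apply/imsetP; exists (- a) => //.
      by apply/eqP; rewrite scaleNr -addr_eq0 h.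
    have := part_lemma Hp cne hw hc => h.
    exact: arithC2 hT (leqnn (n * P)) h.
  move=> /existsPn hno.
  have hge c : c \in ~: Sp -> (n * P + 1 <= #|[set x in T | R x c]|)%N.
    move=> cS; have := hno c; rewrite inE in cS; rewrite cS /= -ltnNge addn1.
    by [].
  have hSp : #|Sp| = p.
    rewrite card_imset ?card_Fp //.
    move=> a b /eqP; rewrite -subr_eq0 -scalerBl scaler_eq0 (negbTE c0ne) orbF.
    by rewrite subr_eq0 => /eqP.
  have hQ : (p + #|~: Sp| = p * (p * (p * P)))%N by rewrite -{1}hSp cardsC hcard.
  have := sum_ker Hp T.
  rewrite (bigID (fun c => c \in Sp)) /=.
  have s1 : (\sum_(c in Sp) #|[set x in T | R x c]| = p * #|T|)%N.
    rewrite (eq_bigr (fun=> #|T|)); first by rewrite sum_nat_const hSp.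
    move=> c /imsetP [a _ ->].
    apply: eq_card => x; rewrite !inE -scalemxAr.
    have -> : (a *: (x *m c0)) 0 0 = a * (x *m c0) 0 0 by rewrite mxE.
    case: (boolP (R x c0)) => h; last by rewrite !andbF.
    by rewrite (eqP h) mulr0 eqxx andbT.
  have s2 : (#|~: Sp| * (n * P + 1) <= \sum_(c | c \notin Sp) #|[set x in T | R x c]|)%N.
    rewrite -sum_nat_const (eq_bigl (fun c => c \notin Sp)); last by move=> c; rewrite inE.
    by apply: leq_sum => c cS; apply: hge; rewrite inE.
  rewrite s1 e3 e0 => hs.
  have := cardsD1 0 T => htd.
  exfalso; apply: (arithB2 hp2 hP npos _ htd hQ ht).
    by case: (_ \in _).
  by rewrite -hs leq_add2l.
- move=> /existsPn hno.
  have hge (c : 'cV['F_p]_k.+3) : c != 0 -> (n * (p * P) + 1 <= #|[set x in S | R x c]|)%N.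
    move=> c0; have := hno c; rewrite c0 /= -ltnNge addn1.
    by [].
  have := sum_ker Hp S.
  rewrite (bigD1 0) //=.
  have -> : [set x in S | R x (0 : 'cV['F_p]_k.+3)] = S.
    by apply/setP => x; rewrite !inE mulmx0 mxE eqxx andbT.
  have s2 : ((p * (p * (p * P))).-1 * (n * (p * P) + 1) <= \sum_(c : 'cV['F_p]_k.+3 | c != 0%R) #|[set x in S | R x c]|)%N.
    rewrite -hcard -(cardC1 (0 : 'cV['F_p]_k.+3)) -sum_nat_const (eq_bigl (fun c => c != 0%R)) //.
    by apply: leq_sum => c; apply: hge.
  rewrite e3 e0 => hs.
  have := cardsD1 0 S => hsd.
  apply: (arithA2 hp2 hP _ hsd).
    by case: (_ \in _).
  by rewrite -hs leq_add2l.
Qed.
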